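(* Let $M\ge 2$ be an integer, $\kappa\ge 0$, $\beta>0$, $\phi\in[0,2\pi]$ and $\bm{\psi}=(\psi_1,\dots,\psi_{M-1})\in[0,2\pi]^{M-1}$ be fixed (deterministic), and let $\mathbf{R}\in\mathbb{R}^{M\times M}$ be a real symmetric positive semidefinite matrix with $R_{\scriptscriptstyle\sum}:=\mathbf{1}^T\mathbf{R}\,\mathbf{1}>0$. For $t\in\{1,\dots,M-1\}$ put $\Phi_t=-t\pi\sin\phi$, and define the vectors $\bm{\omega}_x,\bm{\omega}_y\in\mathbb{R}^M$ by $$\bm{\omega}_{x}=\big[1,\ \cos(\Phi_1+\psi_1)-\sin(\Phi_1+\psi_1),\ \dots,\ \cos(\Phi_{M-1}+\psi_{M-1})-\sin(\Phi_{M-1}+\psi_{M-1})\big]^T,$$ $$\bm{\omega}_{y}=\big[1,\ \cos(\Phi_1+\psi_1)+\sin(\Phi_1+\psi_1),\ \dots,\ \cos(\Phi_{M-1}+\psi_{M-1})+\sin(\Phi_{M-1}+\psi_{M-1})\big]^T.$$ Let $\mathbf{h}_x,\mathbf{h}_y$ be independent real Gaussian random vectors with $\mathbf{h}_x\sim\mathcal{N}\big(\sqrt{\tfrac{\kappa}{2(\kappa+1)}}\,\bm{\omega}_x,\ \tfrac{1}{2(\kappa+1)}\mathbf{R}\big)$ and $\mathbf{h}_y\sim\mathcal{N}\big(\sqrt{\tfrac{\kappa}{2(\kappa+1)}}\,\bm{\omega}_y,\ \tfrac{1}{2(\kappa+1)}\mathbf{R}\big)$, and let $\mathbf{h}^*=\mathbf{h}_x+\mathbbm{i}\,\mathbf{h}_y\in\mathbb{C}^M$.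 Define the random variable $$\xi^{\mathrm{rf}}_{\mathrm{aa-ss}}=\frac{\beta}{M}\big|\mathbf{1}^T\mathbf{h}^*\big|^2 .$$ Then $$\xi^{\mathrm{rf}}_{\mathrm{aa-ss}}\sim \frac{\beta R_{\scriptscriptstyle\sum}}{2(\kappa+1)M}\,\chi^2\Big(2,\ \frac{2\kappa f(\bm{\psi},\phi)}{R_{\scriptscriptstyle\sum}}\Big),$$ where $f(\bm{\psi},\phi)=\upsilon_1(\bm{\psi},\phi)^2+\upsilon_2(\bm{\psi},\phi)^2$ with $$\upsilon_1(\bm{\psi},\phi)=1+\sum_{t=1}^{M-1}\cos(\psi_t+\Phi_t),\qquad \upsilon_2(\bm{\psi},\phi)=\sum_{t=1}^{M-1}\sin(\psi_t+\Phi_t).$$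
   Context: $\mathbf{1}$ denotes the all-ones vector of length $M$ and $\mathbbm{i}=\sqrt{-1}$. $\mathcal{N}(\bm{\mu},\mathbf{C})$ denotes a real Gaussian random vector with mean $\bm{\mu}$ and covariance matrix $\mathbf{C}$. $\chi^2(m,n)$ denotes a non-central chi-squared random variable with $m$ degrees of freedom and non-centrality parameter $n$ (i.e. the distribution of $\sum_{k=1}^m Z_k^2$ with $Z_k$ independent, $Z_k\sim\mathcal{N}(\mu_k,1)$ and $\sum_k\mu_k^2=n$), and $X\sim c\,\chi^2(m,n)$ means $X$ has the distribution of $c$ times such a variable. Interpretation (not needed for the statement): $\mathbf{h}^*$ is the phase-adjusted Rician-fading channel vector from an $M$-antenna power beacon (half-wavelength uniform linear array, azimuth angle $\phi$, preventive phase shifts $\psi_t$, Rician factor $\kappa$, spatial correlation $\mathbf{R}$) to a single-antenna receiver, and $\xi^{\mathrm{rf}}_{\mathrm{aa-ss}}$ is the incident RF power when all antennas transmit the same signal with equal power $\beta/M$. *)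

(* Defs.v *)
From HB Require Import structures.
From mathcomp Require Import all_boot all_order all_algebra.
From mathcomp Require Import all_classical all_reals all_analysis.
Set Implicit Arguments. Unset Strict Implicit. Unset Printing Implicit Defensive.
Import Order.TTheory GRing.Theory Num.Theory.
Local Open Scope classical_set_scope.
Local Open Scope ring_scope.

(* Real Gaussian law N(m, v) with variance v >= 0; v = 0 is the degenerate
   (Dirac) Gaussian.  normal_prob takes the standard deviation. *)
Definition is_normal {R : realType} (d : measure_display) (T : measurableType d)
  (P : probability T R) (X : T -> R) (m v : R) : Prop :=
  measurable_fun setT X /\
  forall B : set R, measurable B ->
    P (X @^-1` B) = (if v == 0 then \d_m B else normal_prob m (Num.sqrt v) B).

Definition is_gaussian_vector {R : realType} (d : measure_display)
  (T : measurableType d) (P : probability T R) (n : nat)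
  (X : 'I_n -> T -> R) (mu : 'I_n -> R) (C : 'M[R]_n) : Prop :=
  forall a : 'I_n -> R,
    is_normal P (fun w => \sum_i a i * X i w) (\sum_i a i * mu i)
      (\sum_i \sum_j a i * C i j * a j).

(* Independence of the random vectors X and Y (independence of the
   sigma-algebras they generate, tested on the generating pi-system of
   measurable rectangles). *)
Definition indep_vectors {R : realType} (d : measure_display)
  (T : measurableType d) (P : probability T R) (n k : nat)
  (X : 'I_n -> T -> R) (Y : 'I_k -> T -> R) : Prop :=
  forall (A : 'I_n -> set R) (B : 'I_k -> set R),
    (forall i, measurable (A i)) -> (forall j, measurable (B j)) ->
    P ([set w | forall i, A i (X i w)] `&` [set w | forall j, B j (Y j w)]) =
    (P [set w | forall i, A i (X i w)] * P [set w | forall j, B j (Y j w)])%E.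

Definition mutually_indep {R : realType} (d : measure_display)
  (T : measurableType d) (P : probability T R) (m : nat)
  (Z : 'I_m -> T -> R) : Prop :=
  forall A : 'I_m -> set R, (forall i, measurable (A i)) ->
    P [set w | forall i, A i (Z i w)] = (\big[mule/1%E]_i P (Z i @^-1` A i))%E.

Definition has_scaled_ncchi2_law {R : realType} (d : measure_display)
  (T : measurableType d) (P : probability T R) (X : T -> R)
  (c : R) (m : nat) (n : R) : Prop :=
  exists (d' : measure_display) (T' : measurableType d') (Q : probability T' R)
         (Z : 'I_m -> T' -> R) (mu : 'I_m -> R),
    [/\ mutually_indep Q Z,
        (forall k, is_normal Q (Z k) (mu k) 1),
        \sum_k mu k ^+ 2 = n &
        forall B : set R, measurable B ->
          P (X @^-1` B) = Q ((fun w => c * \sum_k Z k w ^+ 2) @^-1` B)].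

Definition Phi {R : realType} (phi : R) (t : nat) : R := - (t%:R * pi * sin phi).

Definition omega_x {R : realType} (M : nat) (phi : R) (psi : nat -> R) (i : 'I_M) : R :=
  if (i : nat) == 0%N then 1
  else cos (Phi phi i + psi i) - sin (Phi phi i + psi i).

Definition omega_y {R : realType} (M : nat) (phi : R) (psi : nat -> R) (i : 'I_M) : R :=
  if (i : nat) == 0%N then 1
  else cos (Phi phi i + psi i) + sin (Phi phi i + psi i).

Definition upsilon1 {R : realType} (M : nat) (psi : nat -> R) (phi : R) : R :=
  1 + \sum_(1 <= t < M) cos (psi t + Phi phi t).

Definition upsilon2 {R : realType} (M : nat) (psi : nat -> R) (phi : R) : R :=
  \sum_(1 <= t < M) sin (psi t + Phi phi t).

Definition f_psi_phi {R : realType} (M : nat) (psi : nat -> R) (phi : R) : R :=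
  upsilon1 M psi phi ^+ 2 + upsilon2 M psi phi ^+ 2.

Definition Rsum {R : realType} (M : nat) (Rm : 'M[R]_M) : R :=
  \sum_i \sum_j Rm i j.

(* xi = beta/M * |1^T (hx + i hy)|^2 = beta/M * ((sum hx)^2 + (sum hy)^2) *)
Definition xi_aa_ss {R : realType} (T : Type) (M : nat) (beta : R)
  (hx hy : 'I_M -> T -> R) (w : T) : R :=
  beta / M%:R * ((\sum_i hx i w) ^+ 2 + (\sum_i hy i w) ^+ 2).

(* Main.v *)
Require Import Defs.
From HB Require Import structures.
From mathcomp Require Import all_boot all_order all_algebra.
From mathcomp Require Import all_classical all_reals all_analysis.
Import Order.TTheory GRing.Theory Num.Theory.
Local Open Scope classical_set_scope.
Local Open Scope ring_scope.


Section indep.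
Context {R : realType} (d : measure_display) (T : measurableType d)
  (P : probability T R) (n : nat) (X : 'I_n -> T -> R).

Definition rect : set (set T) :=
  [set E | exists A : 'I_n -> set R, (forall i, measurable (A i)) /\
     E = [set w | forall i, A i (X i w)]].

Lemma rect_setI : setI_closed rect.
Proof.
move=> E1 E2 [A [mA ->]] [B [mB ->]].
exists (fun i => A i `&` B i); split.
  by move=> i; apply: measurableI.
by apply/seteqP; split => w /=; [move=> [h1 h2] i; split|move=> h; split=> i; case: (h i)].
Qed.

Lemma rectT : rect setT.
Proof.
exists (fun _ => setT); split => //.
by apply/seteqP; split.
Qed.

Lemma rect_meas : (forall i, measurable_fun setT (X i)) -> rect `<=` measurable.
Proof.
move=> mX E [A [mA ->]].
have -> : [set w | forall i, A i (X i w)] = \bigcap_(i in [set: 'I_n]) (X i @^-1` A i).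
  apply/seteqP; split => w /= h i; [move=> _; exact: h | exact: (h i I)].
apply: (fin_bigcap_measurable finite_finset).
move=> i _; rewrite -[X in measurable X]setTI; exact: mX.
Qed.

Lemma rect_indep_sigma (F : set T) : (forall i, measurable_fun setT (X i)) ->
  measurable F ->
  (forall E, rect E -> P (E `&` F) = (P E * P F)%E) ->
  forall E, <<s rect >> E -> P (E `&` F) = (P E * P F)%E.
Proof.
move=> mX mF hG.
have PF0 : (0 <= fine (P F))%R by apply: fine_ge0.
pose r : {nonneg R} := NngNum PF0.
have key := @g_sigma_algebra_measure_unique d R T rect (rect_meas mX)
  (fun _ => setT) (fun _ => rectT) _ (mrestr P mF) (mscale r P) rect_setI.
have PFE : P F = (fine (P F))%:E by rewrite fineK// fin_num_measure.
have k2 : forall E, <<s rect >> E -> mrestr P mF E = mscale r P E.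
  apply: key.
  - by apply/seteqP; split => // w _; exists 0%N.
  - move=> A rA; change (P (A `&` F) = ((fine (P F))%:E * P A)%E).
    by rewrite hG// muleC -PFE.
  - move=> k; change (P (setT `&` F) < +oo)%E; rewrite setTI.
    by apply: (le_lt_trans (probability_le1 _ mF)); rewrite ltey.
move=> E sE; have := k2 E sE.
change (P (E `&` F) = ((fine (P F))%:E * P E)%E -> P (E `&` F) = (P E * P F)%E) => ->.
by rewrite muleC -PFE.
Qed.

Lemma rect_lin_sigma (a : 'I_n -> R) (B : set R) : measurable B ->
  <<s rect >> ((fun w => \sum_i a i * X i w) @^-1` B).
Proof.
move=> mB.
pose Tg := g_sigma_algebraType rect.
have mXi : forall i, measurable_fun (setT : set Tg) (fun w : Tg => a i * X i w).
  move=> i.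
  have mXi : measurable_fun (setT : set Tg) (X i : Tg -> R).
    move=> _ C mC; rewrite setTI; apply: sub_sigma_algebra.
    exists (fun j => if j == i then C else setT); split.
      by move=> j; case: ifP.
    apply/seteqP; split => w /=.
      by move=> h j; case: ifP => // /eqP ->.
    by move=> /(_ i); rewrite eqxx.
  exact: (measurable_realfun.measurable_funM (measurable_cst (a i)) mXi).
have := @measurable_sum _ Tg R setT _ (index_enum 'I_n) _ mXi measurableT B mB.
by rewrite setTI.
Qed.

End indep.
Arguments rect {R d T n} X.
Arguments rect_meas {R d T n X}.
Arguments rect_indep_sigma {R d T P n X F}.
Arguments rect_lin_sigma {R d T n} X a {B}.

From mathcomp Require Import ring lra.

Lemma sum_omega_x {R : realType} (M : nat) (phi : R) (psi : nat -> R) :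
  (1 <= M)%N ->
  \sum_(i < M) omega_x phi psi i = upsilon1 M psi phi - upsilon2 M psi phi.
Proof.
case: M => // M _; rewrite big_ord_recl /omega_x /= /upsilon1 /upsilon2.
rewrite !big_add1 /= !big_mkord -addrA -sumrB; congr (_ + _).
by apply: eq_bigr => i _; rewrite (addrC (psi _)).
Qed.

Lemma sum_omega_y {R : realType} (M : nat) (phi : R) (psi : nat -> R) :
  (1 <= M)%N ->
  \sum_(i < M) omega_y phi psi i = upsilon1 M psi phi + upsilon2 M psi phi.
Proof.
case: M => // M _; rewrite big_ord_recl /omega_y /= /upsilon1 /upsilon2.
rewrite !big_add1 /= !big_mkord -addrA -big_split; congr (_ + _).
by apply: eq_bigr => i _; rewrite (addrC (psi _)).
Qed.

Theorem theorem1 (R : realType) (M : nat) (kappa beta phi : R) (psi : nat -> R)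
  (Rm : 'M[R]_M) (d : measure_display) (T : measurableType d)
  (P : probability T R) (hx hy : 'I_M -> T -> R) :
  (2 <= M)%N ->
  0 <= kappa -> 0 < beta -> 0 <= phi <= pi *+ 2 ->
  (forall t, (1 <= t <= M.-1)%N -> 0 <= psi t <= pi *+ 2) ->
  Rm^T = Rm ->
  (forall v : 'cV[R]_M, 0 <= (v^T *m Rm *m v) 0 0) ->
  0 < Rsum Rm ->
  is_gaussian_vector P hx
    (fun i => Num.sqrt (kappa / (2 * (kappa + 1))) * omega_x phi psi i)
    ((2 * (kappa + 1))^-1 *: Rm) ->
  is_gaussian_vector P hy
    (fun i => Num.sqrt (kappa / (2 * (kappa + 1))) * omega_y phi psi i)
    ((2 * (kappa + 1))^-1 *: Rm) ->
  indep_vectors P hx hy ->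
  has_scaled_ncchi2_law P (xi_aa_ss beta hx hy)
    (beta * Rsum Rm / (2 * (kappa + 1) * M%:R)) 2
    (2 * kappa * f_psi_phi M psi phi / Rsum Rm).
Proof.

Proof.
move=> M2 k0 b0 _ _ _ _ Rs0 hGx hGy hind.
have M1 : (1 <= M)%N by apply: leq_trans M2.
have k1 : 0 < 2 * (kappa + 1) by rewrite mulr_gt0 // ltr_wpDl.
set s := Num.sqrt (Rsum Rm / (2 * (kappa + 1))).
have s0 : 0 < s by rewrite sqrtr_gt0 divr_gt0.
have s2 : s ^+ 2 = Rsum Rm / (2 * (kappa + 1)) by rewrite sqr_sqrtr // ltW // divr_gt0.
set c0 := Num.sqrt (kappa / (2 * (kappa + 1))).
have c02 : c0 ^+ 2 = kappa / (2 * (kappa + 1)) by rewrite sqr_sqrtr // divr_ge0 // ltW.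
pose Zx := fun w => \sum_i s^-1 * hx i w.
pose Zy := fun w => \sum_i s^-1 * hy i w.
pose mx := \sum_(i < M) s^-1 * (c0 * omega_x phi psi i).
pose my := \sum_(i < M) s^-1 * (c0 * omega_y phi psi i).
have var1 : \sum_i \sum_j s^-1 * ((2 * (kappa + 1))^-1 *: Rm) i j * s^-1 = 1.
  transitivity (s^-1 * s^-1 * (2 * (kappa + 1))^-1 * Rsum Rm).
    rewrite /Rsum mulr_sumr; apply: eq_bigr => i _; rewrite mulr_sumr.
    by apply: eq_bigr => j _; rewrite mxE; ring.
  have -> : s^-1 * s^-1 = (s ^+ 2)^-1 by rewrite expr2 invfM.
  rewrite s2; field; apply/andP; split; rewrite ?gt_eqF //.
  by rewrite ltr_wpDl.
have nx : is_normal P Zx mx 1 by rewrite -var1; exact: (hGx (fun _ => s^-1)).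
have ny : is_normal P Zy my 1 by rewrite -var1; exact: (hGy (fun _ => s^-1)).
have coord (X : 'I_M -> T -> R) mu C : is_gaussian_vector P X mu C ->
    forall i, measurable_fun setT (X i).
  move=> hG i; have [+ _] := hG (fun j => if j == i then 1 else 0).
  congr measurable_fun; apply/funext => w.
  rewrite (bigD1 i) //= eqxx mul1r big1 ?addr0 // => j /negbTE ->.
  by rewrite mul0r.
have mhx := coord _ _ _ hGx; have mhy := coord _ _ _ hGy.
have indep A0 A1 : measurable A0 -> measurable A1 ->
    P (Zx @^-1` A0 `&` Zy @^-1` A1) = (P (Zx @^-1` A0) * P (Zy @^-1` A1))%E.
  move=> mA0 mA1.
  have sEx := rect_lin_sigma hx (fun _ => s^-1) mA0.
  have sEy := rect_lin_sigma hy (fun _ => s^-1) mA1.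
  have mEx : measurable (Zx @^-1` A0).
    by rewrite -[X in measurable X]setTI; apply: nx.1.
  have step : forall Fy, rect hy Fy -> P (Fy `&` Zx @^-1` A0) = (P Fy * P (Zx @^-1` A0))%E.
    move=> Fy rFy; rewrite setIC muleC.
    apply: (@rect_indep_sigma _ _ _ P _ hx Fy mhx (rect_meas mhy _ rFy)) => // E [A [mA ->]].
    by case: rFy => B [mB ->]; apply: hind.
  by rewrite setIC muleC; apply: (@rect_indep_sigma _ _ _ P _ hy _ mhy mEx step).
pose Z (k : 'I_2) := if val k == 0%N then Zx else Zy.
pose mu (k : 'I_2) := if val k == 0%N then mx else my.
exists d, T, P, Z, mu; split.
- move=> A mA.
  rewrite !big_ord_recl big_ord0 mule1 /Z /=.
  rewrite -indep //.
  congr (P _); apply/seteqP; split => w /=.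
    by move=> h; split; [exact: (h ord0) | exact: (h (lift ord0 ord0))].
  move=> [h0 h1] [[|[|m]] hi] //=.
    by rewrite (_ : Ordinal hi = ord0) //; exact: val_inj.
  by rewrite (_ : Ordinal hi = lift ord0 ord0) //; exact: val_inj.
- by move=> k; rewrite /Z /mu; case: ifP.
- rewrite !big_ord_recl big_ord0 /mu /= addr0 /mx /my -!mulr_sumr.
  rewrite sum_omega_x // sum_omega_y // /f_psi_phi.
  set u1 := upsilon1 M psi phi; set u2 := upsilon2 M psi phi.
  rewrite !exprMn exprVn s2 c02; field.
  apply/andP; split; rewrite ?gt_eqF //.
  by rewrite ?gt_eqF // ltr_wpDl.
- move=> B mB; congr (P _); apply: (congr1 (fun f => f @^-1` B)).
  apply/funext => w; rewrite /xi_aa_ss !big_ord_recl big_ord0 /Z /= addr0.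
  rewrite /Zx /Zy -!mulr_sumr !exprMn exprVn s2.
  have M0 : M%:R != 0 :> R by rewrite pnatr_eq0 -lt0n.
  field; rewrite M0 /= gt_eqF //=.
  by rewrite ?gt_eqF // ltr_wpDl.
by rewrite ltr_wpDl.
Qed.
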